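(* Let $d \geq 3$ and $n \geq 2$ be primes with $\gcd(d,n) = 1$. Let $u \in S_{d,n}$ and let $[a_1,\dots,a_r]$ be a partition of $u$. Then there is some $i \in \{1,\dots,r\}$ with $\gcd(a_i, nd) = 1$.
   Context: Let $n^\ast \in \{1,\dots,d-1\}$ be the unique integer with $n^\ast \equiv -n \pmod d$, and $S_{d,n} = \{ n^\ast + jd : j \in \mathbb{Z}_{\geq 0},\ n^\ast + jd < n(d-1)\}$. A partition of a positive integer $u$ is a non-empty multiset $[a_1,\dots,a_r]$ of positive integers with $\sum a_i = u$. *)

(* Defs.v *)
From mathcomp Require Import all_boot.
Set Implicit Arguments. Unset Strict Implicit. Unset Printing Implicit Defensive.

Definition is_nstar (d n ns : nat) : Prop :=
  0 < ns < d /\ (ns + n) %% d = 0.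

Definition in_S (d n u : nat) : Prop :=
  exists ns j, is_nstar d n ns /\ u = ns + j * d /\ u < n * (d - 1).

(* A partition of u: a non-empty multiset (represented by a list) of
   positive integers summing to u. *)
Definition is_partition (u : nat) (s : seq nat) : Prop :=
  s != [::] /\ all (fun a => 0 < a) s /\ sumn s = u.

(* Main.v *)
Require Import Defs.
From mathcomp Require Import all_boot zify.

Lemma decomp_sum (d n : nat) (s : seq nat) :
  all (fun a => (n %| a) || (d %| a)) s ->
  exists x y, sumn s = x * n + y * d.
Proof.
elim: s => [|a s IH] /=; first by exists 0, 0.
case/andP => /orP [] /dvdnP [k ->] /IH [x [y ->]].
- by exists (k + x), y; rewrite mulnDl addnA.
- by exists x, (k + y); rewrite mulnDl addnCA addnA.
Qed.

Theorem lemma3p9 (d n u : nat) (s : seq nat) :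
  prime d -> 3 <= d -> prime n -> 2 <= n -> coprime d n ->
  in_S d n u -> is_partition u s ->
  exists2 a, a \in s & coprime a (n * d).
Proof.
move=> pd d3 pn n2 cdn [ns [j [[/andP [ns0 nsd] nsm] [Hu Hlt]]]] [_ [_ Hsum]].
case: (boolP (has (fun a => coprime a (n * d)) s)) => [/hasP [a ha hc]|hn].
  by exists a.
exfalso.
have Hall : all (fun a => (n %| a) || (d %| a)) s.
  apply/allP => a ha.
  have : ~~ coprime a (n * d) by apply: (contra _ hn) => hc; apply/hasP; exists a.
  rewrite coprimeMr (coprime_sym a n) (coprime_sym a d) !prime_coprime //.
  by rewrite negb_and !negbK.
have [x [y Hxy]] := @decomp_sum d n s Hall.
have Hmod : (x * n + n) %% d = 0.
  have E : y * d + (x * n + n) = j * d + (ns + n).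
    by rewrite -Hsum in Hu; lia.
  by move: (congr1 (modn^~ d) E); rewrite !modnMDl nsm.
have Hd : d %| (x.+1) * n by rewrite /dvdn mulSn addnC Hmod.
rewrite Gauss_dvdl // in Hd.
have Hx : d <= x.+1 by apply: dvdn_leq.
have : n * (d - 1) <= u.
  rewrite -Hsum Hxy; apply: leq_trans (leq_addr _ _).
  by rewrite mulnC leq_mul2r; apply/orP; right; rewrite leq_subLR add1n.
by rewrite leqNgt Hlt.
Qed.
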